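(* Let $\mathcal{X},\mathcal{Y}$ be finite sets, $\mathcal{P}$ a family of strictly positive joint pmfs on $\mathcal{X}\times\mathcal{Y}$, $\rho>0$ and $q\in\mathbb{R}\setminus\{0\}$. Suppose $C_{q,\rho}=\min_{Q}\sup_{P\in\mathcal{P}}q\,\mathcal{RE}_{(\frac{q}{1+\rho},q)}(P,Q)$, the minimum over strictly positive joint pmfs $Q$ on $\mathcal{X}\times\mathcal{Y}$, exists (is finite) and is attained at some $Q^\ast$. Then (i) for every conditional guessing function $G$, $$\sup_{P\in\mathcal{P}}R_{q,\rho}(P,G)\;\geq\;C_{q,\rho}-\ln(1+\ln|\mathcal{X}|);$$ (ii) the conditional guessing function $\widetilde{G}=G^\ast_{Q^\ast}$ (guessing, for each $y$, in decreasing order of $Q^\ast_q(x|y)$) satisfies $$\sup_{P\in\mathcal{P}}R_{q,\rho}(P,\widetilde{G})\;\leq\;C_{q,\rho}+\ln(1+\ln|\mathcal{X}|).$$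
   Context: A conditional guessing function is a map $G(\cdot|\cdot)$ on $\mathcal{X}\times\mathcal{Y}$ such that for each $y$, $x\mapsto G(x|y)$ is a bijection from $\mathcal{X}$ onto $\{1,\dots,|\mathcal{X}|\}$. The $q$-normalized expectation under $P$ is $E_q[F(X,Y)]=\frac{\sum_{x,y}F(x,y)P(x,y)^q}{\sum_{x,y}P(x,y)^q}$. For a strictly positive joint pmf $R$: $R(x|y)=R(x,y)/\sum_{x'}R(x',y)$ and $R_q(x|y)=R(x|y)^q/\sum_{x'}R(x'|y)^q$; $G^\ast_R$ denotes any conditional guessing function such that $G^\ast_R(x|y)<G^\ast_R(x'|y)$ implies $R_q(x|y)\ge R_q(x'|y)$. The redundancy is $R_{q,\rho}(P,G)=\frac1\rho\ln E_q[G(X|Y)^\rho]-\frac1\rho\ln E_q[G^\ast_P(X|Y)^\rho]$, expectations w.r.t. $P$. For strictly positive joint pmfs $P,Q$ and $\alpha\neq\beta$, $\alpha\beta\ne0$, the conditional relative $(\alpha,\beta)$-entropy is $$\mathcal{RE}_{(\alpha,\beta)}(P,Q)=\frac{\alpha}{\beta(\beta-\alpha)}\ln\frac{\sum_{y}\left\{\sum_{x}P(x,y)^\beta Q(x,y)^{\alpha-\beta}\right\}\left\{\sum_{x}Q(x,y)^{\alpha}\right\}^{\frac{\beta}{\alpha}-1}}{\sum_{y}\left\{\sum_{x}P(x,y)^\alpha\right\}^{\frac{\beta}{\alpha}}}.$$ *)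

(* Defs.v *)
From HB Require Import structures.
From Stdlib Require Import Reals ClassicalEpsilon.
From mathcomp Require Import all_boot.

Set Implicit Arguments.
Unset Strict Implicit.
Unset Printing Implicit Defensive.

Local Open Scope R_scope.

Lemma Rplus_assoc' : associative Rplus.
Proof. by move=> a b c; rewrite Rplus_assoc. Qed.

HB.instance Definition _ :=
  Monoid.isComLaw.Build R R0 Rplus Rplus_assoc' Rplus_comm Rplus_0_l.

Definition sumR (T : finType) (f : T -> R) : R := \big[Rplus/R0]_(t : T) f t.

Section Defs.
Variables (X Y : finType).

Definition pos_pmf (P : X -> Y -> R) : Prop :=
  (forall x y, 0 < P x y) /\ sumR (fun x => sumR (fun y => P x y)) = 1.

Definition cond_guess (G : X -> Y -> nat) : Prop :=
  forall y,
    (forall x, (1 <= G x y <= #|X|)%N) /\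
    (forall x x', G x y = G x' y -> x = x') /\
    (forall k, (1 <= k <= #|X|)%N -> exists x, G x y = k).

Definition Eq (q : R) (P : X -> Y -> R) (F : X -> Y -> R) : R :=
  sumR (fun x => sumR (fun y => F x y * Rpower (P x y) q)) /
  sumR (fun x => sumR (fun y => Rpower (P x y) q)).

Definition condp (Rj : X -> Y -> R) (x : X) (y : Y) : R :=
  Rj x y / sumR (fun x' => Rj x' y).

Definition condq (q : R) (Rj : X -> Y -> R) (x : X) (y : Y) : R :=
  Rpower (condp Rj x y) q / sumR (fun x' => Rpower (condp Rj x' y) q).

Definition is_Gstar (q : R) (Rj : X -> Y -> R) (G : X -> Y -> nat) : Prop :=
  cond_guess G /\
  forall x x' y, (G x y < G x' y)%N -> condq q Rj x' y <= condq q Rj x y.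

Definition guess_moment (q rho : R) (P : X -> Y -> R) (G : X -> Y -> nat) : R :=
  Eq q P (fun x y => Rpower (INR (G x y)) rho).

(* E_q[G^*_P(X|Y)^rho]: the value for any G^*_P (it does not depend on the
   choice of G^*_P); chosen via the epsilon operator *)
Definition opt_moment (q rho : R) (P : X -> Y -> R) : R :=
  epsilon (inhabits 0)
    (fun v => exists G, is_Gstar q P G /\ v = guess_moment q rho P G).

Definition redundancy (q rho : R) (P : X -> Y -> R) (G : X -> Y -> nat) : R :=
  / rho * ln (guess_moment q rho P G) - / rho * ln (opt_moment q rho P).

Definition RE (alpha beta : R) (P Q : X -> Y -> R) : R :=
  alpha / (beta * (beta - alpha)) *
  ln (sumR (fun y =>
          sumR (fun x => Rpower (P x y) beta * Rpower (Q x y) (alpha - beta)) *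
          Rpower (sumR (fun x => Rpower (Q x y) alpha)) (beta / alpha - 1))
      / sumR (fun y => Rpower (sumR (fun x => Rpower (P x y) alpha)) (beta / alpha))).

End Defs.

(* Main.v *)
Require Import Defs.
From Stdlib Require Import Reals Lra ClassicalEpsilon Classical.
From mathcomp Require Import all_boot.
Local Open Scope R_scope.

Section S.
Variable T : finType.

Lemma sumR_le (f g : T -> R) : (forall t, f t <= g t) -> sumR f <= sumR g.
Proof.
move=> H; rewrite /sumR; apply: (big_ind2 (fun a b => a <= b)) => //.
- lra.
- move=> *; lra.
Qed.

Lemma sumR_ge0 (f : T -> R) : (forall t, 0 <= f t) -> 0 <= sumR f.
Proof.
move=> H; rewrite /sumR; apply: (big_ind (fun a => 0 <= a)) => //.
- lra.
- move=> *; lra.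
Qed.

Lemma sumR_gt0 (f : T -> R) (t0 : T) : (forall t, 0 < f t) -> 0 < sumR f.
Proof.
move=> H; rewrite /sumR (bigD1 t0) //=.
have : 0 <= \big[Rplus/R0]_(i | i != t0) f i.
  apply: (big_ind (fun a => 0 <= a)) => //; [lra|move=> *; lra|move=> i _; left; exact: H].
move=> Hb; have Ht := H t0; lra.
Qed.

Lemma sumR_scal (c : R) (f : T -> R) : sumR (fun t => c * f t) = c * sumR f.
Proof.
rewrite /sumR; elim/big_rec2: _ => [|i a b _ ->]; lra.
Qed.

Lemma sumR_add (f g : T -> R) : sumR (fun t => f t + g t) = sumR f + sumR g.
Proof. by rewrite /sumR big_split. Qed.

Lemma sumR_ext (f g : T -> R) : (forall t, f t = g t) -> sumR f = sumR g.
Proof. by move=> H; rewrite /sumR; apply: eq_bigr => i _; apply: H. Qed.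
End S.

Lemma sumR_exchange (X Y : finType) (F : X -> Y -> R) :
  sumR (fun x => sumR (fun y => F x y)) = sumR (fun y => sumR (fun x => F x y)).
Proof. by rewrite /sumR; apply: exchange_big. Qed.
Arguments sumR_le {T f g} _.
Arguments sumR_ge0 {T f} _.
Arguments sumR_gt0 {T f} t0 _.
Arguments sumR_ext {T f g} _.

Lemma reindexG (X : finType) (g : X -> nat)
  (H1 : forall x, (1 <= g x <= #|X|)%N) (Hinj : injective g)
  (Hsurj : forall k, (1 <= k <= #|X|)%N -> exists x, g x = k) (h : nat -> R) :
  sumR (fun x => h (g x)) = \big[Rplus/R0]_(k <- iota 1 #|X|) h k.
Proof.
rewrite /sumR -(big_map g xpredT h).
apply: perm_big; apply: uniq_perm.
- rewrite map_inj_uniq //; exact: index_enum_uniq.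
- exact: iota_uniq.
- move=> k; rewrite mem_iota; apply/idP/idP.
  + by case/mapP=> x _ ->; rewrite add1n ltnS; apply: H1.
  + move=> Hk; have [x Hx] : exists x, g x = k.
      by apply: Hsurj; rewrite add1n ltnS in Hk.
    by rewrite -Hx; apply: map_f; rewrite mem_index_enum.
Qed.

Lemma count_iota (n m : nat) :
  \big[Rplus/R0]_(k <- iota 1 n) (if (k <= m)%N then 1 else 0) = INR (minn m n).
Proof.
elim: n => [|n IH]; first by rewrite big_nil minn0.
have -> : (iota 1 n.+1 = iota 1 n ++ [:: n.+1])%N.
  by rewrite -(addn1 n) iotaD add1n addn1.
rewrite big_cat IH /= big_cons big_nil.
case: (leqP n m) => Hnm.
- case: (ltnP n m) => H.
  + rewrite (minn_idPr H) S_INR; lra.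
  + have Emn : m = n by apply/eqP; rewrite eqn_leq H Hnm.
    rewrite Emn (minn_idPl (leqnSn n)); lra.
- rewrite ifF; last by apply/negbTE; rewrite -leqNgt ltnW.
  rewrite (minn_idPl (leqW (ltnW Hnm))); lra.
Qed.

Lemma ln_le_sub1 z : 0 < z -> ln z <= z - 1.
Proof. move=> Hz; have := exp_ineq1_le (ln z); rewrite exp_ln //; lra. Qed.

Lemma harm_step a : 0 < a -> / (a + 1) <= ln (a + 1) - ln a.
Proof.
move=> Ha.
have H := ln_le_sub1 (a / (a + 1)) ltac:(apply: Rdiv_lt_0_compat; lra).
rewrite /Rdiv ln_mult ?ln_Rinv in H; try (apply: Rinv_0_lt_compat); try lra.
have E : a * / (a + 1) - 1 = - / (a + 1) by field; lra.
lra.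
Qed.

Lemma harmonic n : (1 <= n)%N ->
  \big[Rplus/R0]_(k <- iota 1 n) / INR k <= 1 + ln (INR n).
Proof.
elim: n => [//|n IH] _.
have -> : (iota 1 n.+1 = iota 1 n ++ [:: n.+1])%N.
  by rewrite -(addn1 n) iotaD add1n addn1.
rewrite big_cat /= big_cons big_nil.
case: n IH => [|n] IH.
- rewrite big_nil /= ln_1; lra.
- have := IH isT. rewrite (S_INR n.+1).
  have Hp : 0 < INR n.+1 by apply: lt_0_INR; apply/ltP.
  have := harm_step _ Hp. lra.
Qed.

Lemma ln_le' a b : 0 < a -> a <= b -> ln a <= ln b.
Proof.
move=> Ha [Hab|->]; last lra.
left; exact: ln_increasing.
Qed.

Lemma ratio_ge1 a b : 0 < a -> a <= b -> 1 <= b / a.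
Proof.
move=> Ha Hab; apply: (Rmult_le_reg_r a) => //.
rewrite /Rdiv Rmult_assoc Rinv_l; lra.
Qed.

Lemma guess_upper (X : finType) (g : X -> nat) (w : X -> R)
  (H1 : forall x, (1 <= g x <= #|X|)%N) (Hinj : injective g)
  (Hsurj : forall k, (1 <= k <= #|X|)%N -> exists x, g x = k)
  (Hord : forall x x', (g x < g x')%N -> w x' <= w x)
  (Hw : forall x, 0 < w x) (s : R) (Hs : 0 < s) (x : X) :
  INR (g x) <= sumR (fun x' => Rpower (w x' / w x) s).
Proof.
have E : INR (g x) = sumR (fun x' => (fun k => if (k <= g x)%N then 1 else 0) (g x')).
  rewrite (@reindexG X g H1 Hinj Hsurj (fun k => if (k <= g x)%N then 1 else 0)) count_iota.
  by case/andP: (H1 x) => _ /minn_idPl ->.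
rewrite E; apply: sumR_le => x' /=.
have Hpos : 0 < w x' / w x by apply: Rdiv_lt_0_compat.
case: ifP => Hle.
- have Hw' : w x <= w x'.
    move: Hle; rewrite leq_eqVlt => /orP [/eqP Heq|Hlt].
    + by rewrite (Hinj _ _ Heq); lra.
    + exact: Hord.
  rewrite /Rpower.
  have : 0 <= s * ln (w x' / w x).
    apply: Rmult_le_pos; first lra.
    rewrite -ln_1; apply: ln_le'; first lra.
    by apply: ratio_ge1.
  move=> H; have := exp_ineq1_le (s * ln (w x' / w x)); lra.
- left; exact: exp_pos.
Qed.

Lemma Rpower_inv a q : 0 < a -> Rpower (/ a) q = / Rpower a q.
Proof. move=> Ha; rewrite /Rpower ln_Rinv // -exp_Ropp; f_equal; ring. Qed.

Lemma Rpower_pos a q : 0 < Rpower a q.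
Proof. exact: exp_pos. Qed.

Lemma condq_eq (X Y : finType) q (Q : X -> Y -> R) (HQ : forall x y, 0 < Q x y) x y :
  condq q Q x y = Rpower (Q x y) q / sumR (fun x' => Rpower (Q x' y) q).
Proof.
rewrite /condq /condp.
have HS : 0 < sumR (fun x' => Q x' y) by apply: (sumR_gt0 x) => t; apply: HQ.
have E : forall x', Rpower (Q x' y / sumR (fun x'0 => Q x'0 y)) q =
           Rpower (Q x' y) q * / Rpower (sumR (fun x'0 => Q x'0 y)) q.
  move=> x'; rewrite /Rdiv -Rpower_mult_distr ?Rpower_inv //; last exact: Rinv_0_lt_compat.
have E2 : sumR (fun x' => Rpower (Q x' y / sumR (fun x'0 => Q x'0 y)) q) =
   / Rpower (sumR (fun x'0 => Q x'0 y)) q * sumR (fun x' => Rpower (Q x' y) q).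
  by rewrite -sumR_scal; apply: sumR_ext => t; rewrite E; ring.
rewrite E E2.
have Hc := Rpower_pos (sumR (fun x'0 => Q x'0 y)) q.
have HS2 : 0 < sumR (fun x' => Rpower (Q x' y) q) by apply: (sumR_gt0 x) => t; apply: Rpower_pos.
field; split; lra.
Qed.

Lemma Gstar_point (X Y : finType) q rho (Q : X -> Y -> R) (G : X -> Y -> nat)
  (HQ : forall x y, 0 < Q x y) (Hrho : 0 < rho) :
  is_Gstar q Q G -> forall x y,
  Rpower (INR (G x y)) rho <=
  Rpower (Q x y) (q / (1 + rho) - q) *
  Rpower (sumR (fun x' => Rpower (Q x' y) (q / (1 + rho)))) rho.
Proof.
case=> Hcg Hord x y.
case: (Hcg y) => H1 [Hinj Hsurj].
set w := fun x => Rpower (Q x y) q.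
have Hw : forall x, 0 < w x by move=> t; apply: Rpower_pos.
have HS : 0 < sumR w by apply: (sumR_gt0 x).
have Hord' : forall x x', (G x y < G x' y)%N -> w x' <= w x.
  move=> a b /(Hord _ _ y); rewrite !condq_eq // => H.
  have := Rmult_le_compat_r (sumR w) _ _ (Rlt_le _ _ HS) H.
  rewrite /Rdiv !Rmult_assoc Rinv_l; last exact: Rgt_not_eq.
  by rewrite !Rmult_1_r.
have Hs : 0 < / (1 + rho) by apply: Rinv_0_lt_compat; lra.
have Hu := @guess_upper X (G^~ y) w H1 (fun a b => Hinj a b) Hsurj Hord' Hw _ Hs x.
set a := q / (1 + rho).
have E : sumR (fun x' => Rpower (w x' / w x) (/ (1 + rho))) =
   sumR (fun x' => Rpower (Q x' y) a) * exp (- a * ln (Q x y)).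
  rewrite Rmult_comm -sumR_scal; apply: sumR_ext => t.
  rewrite /w /Rpower /Rdiv ln_mult ?ln_Rinv ?ln_exp; try (apply: exp_pos).
    rewrite -exp_plus /a /Rdiv; f_equal; ring.
  apply: Rinv_0_lt_compat; exact: exp_pos.
rewrite E in Hu.
have Hg : 0 < INR (G x y).
  apply: lt_0_INR; apply/ltP; by case/andP: (H1 x).
have := Rle_Rpower_l _ _ rho (Rlt_le _ _ Hrho) (conj Hg Hu).
rewrite -Rpower_mult_distr; last (by apply: exp_pos); last first.
  by apply: (sumR_gt0 x) => t; apply: Rpower_pos.
have -> : Rpower (exp (- a * ln (Q x y))) rho = Rpower (Q x y) (a - q).
  rewrite /Rpower ln_exp; f_equal; rewrite /a; field; lra.
lra.
Qed.
Arguments Gstar_point {X Y q rho Q G}.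

Lemma young a b s : 0 < a -> 0 < b -> 0 < s < 1 ->
  Rpower a s * Rpower b (1 - s) <= s * a + (1 - s) * b.
Proof.
move=> Ha Hb Hs.
rewrite /Rpower -exp_plus.
set m := s * ln a + (1 - s) * ln b.
have Ka : exp m * (1 + (ln a - m)) <= a.
  have := exp_ineq1_le (ln a - m).
  rewrite /Rminus exp_plus exp_ln // exp_Ropp => H.
  have Hm := exp_pos m.
  have := Rmult_le_compat_l (exp m) _ _ (Rlt_le _ _ Hm) H.
  by rewrite (Rmult_comm a) -Rmult_assoc Rinv_r ?Rmult_1_l; [|lra].
have Kb : exp m * (1 + (ln b - m)) <= b.
  have := exp_ineq1_le (ln b - m).
  rewrite /Rminus exp_plus exp_ln // exp_Ropp => H.
  have Hm := exp_pos m.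
  have := Rmult_le_compat_l (exp m) _ _ (Rlt_le _ _ Hm) H.
  by rewrite (Rmult_comm b) -Rmult_assoc Rinv_r ?Rmult_1_l; [|lra].
have := Rmult_le_compat_l s _ _ (ltac:(lra) : 0 <= s) Ka.
have := Rmult_le_compat_l (1 - s) _ _ (ltac:(lra) : 0 <= 1 - s) Kb.
have E : s * (exp m * (1 + (ln a - m))) + (1 - s) * (exp m * (1 + (ln b - m))) = exp m.
  rewrite /m; ring.
lra.
Qed.

Lemma holder (T : finType) (t0 : T) (u v : T -> R) s :
  (forall t, 0 < u t) -> (forall t, 0 < v t) -> 0 < s < 1 ->
  sumR (fun t => Rpower (u t) s * Rpower (v t) (1 - s)) <=
  Rpower (sumR u) s * Rpower (sumR v) (1 - s).
Proof.
move=> Hu Hv Hs.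
have HA : 0 < sumR u by apply: (sumR_gt0 t0).
have HB : 0 < sumR v by apply: (sumR_gt0 t0).
set A := sumR u; set B := sumR v.
have HC : 0 < Rpower A s * Rpower B (1 - s) by apply: Rmult_lt_0_compat; apply: Rpower_pos.
set C := Rpower A s * Rpower B (1 - s).
have K : forall t, Rpower (u t) s * Rpower (v t) (1 - s) =
    C * (Rpower (u t / A) s * Rpower (v t / B) (1 - s)).
  move=> t; rewrite /Rdiv -!Rpower_mult_distr ?Rpower_inv //;
    try (apply: Rinv_0_lt_compat; done).
  rewrite /C; field; split; apply: Rgt_not_eq; apply: Rpower_pos.
rewrite (sumR_ext K) sumR_scal.
have Hle : sumR (fun t => Rpower (u t / A) s * Rpower (v t / B) (1 - s)) <= 1.
  have Y := fun t => young (u t / A) (v t / B) s (Rdiv_lt_0_compat _ _ (Hu t) HA) (Rdiv_lt_0_compat _ _ (Hv t) HB) Hs.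
  apply: Rle_trans (sumR_le Y) _.
  rewrite sumR_add !sumR_scal.
  rewrite (sumR_ext (g := fun t => / A * u t)); last by move=> t; rewrite /Rdiv Rmult_comm.
  rewrite (sumR_ext (f := fun t => v t / B) (g := fun t => / B * v t)); last by move=> t; rewrite /Rdiv Rmult_comm.
  rewrite !sumR_scal -/A -/B. rewrite !Rinv_l; try lra; apply: Rgt_not_eq; done.
have := Rmult_le_compat_l C _ _ (Rlt_le _ _ HC) Hle; lra.
Qed.

Section Main.
Variables (X Y : finType) (q rho : R).

Definition Msum (P : X -> Y -> R) (G : X -> Y -> nat) :=
  sumR (fun x => sumR (fun y => Rpower (INR (G x y)) rho * Rpower (P x y) q)).
Definition Nsum (P Q : X -> Y -> R) :=
  sumR (fun y => sumR (fun x => Rpower (P x y) q * Rpower (Q x y) (q / (1 + rho) - q)) *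
     Rpower (sumR (fun x => Rpower (Q x y) (q / (1 + rho)))) rho).
Definition Dsum (P : X -> Y -> R) :=
  sumR (fun y => Rpower (sumR (fun x => Rpower (P x y) (q / (1 + rho)))) (1 + rho)).

Hypothesis Hrho : 0 < rho.

Lemma U_bound P Q G : (forall x y, 0 < Q x y) -> is_Gstar q Q G -> Msum P G <= Nsum P Q.
Proof.
move=> HQ HG; rewrite /Msum /Nsum.
apply: Rle_trans (sumR_le (fun x => sumR_le (fun y =>
   Rmult_le_compat_r _ _ _ (Rlt_le _ _ (Rpower_pos (P x y) q)) (Gstar_point HQ Hrho HG x y)))) _.
rewrite sumR_exchange; right; apply: sumR_ext => y.
rewrite Rmult_comm -sumR_scal; apply: sumR_ext => x; ring.
Qed.

Lemma UP_eq P : (forall x y, 0 < P x y) -> (exists x0 : X, True) -> Nsum P P = Dsum P.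
Proof.
move=> HP [x0 _]; rewrite /Nsum /Dsum; apply: sumR_ext => y.
rewrite (sumR_ext (g := fun x => Rpower (P x y) (q / (1 + rho)))); last first.
  by move=> x; rewrite -Rpower_plus; f_equal; ring.
have HS : 0 < sumR (fun x => Rpower (P x y) (q / (1 + rho))) by apply: (sumR_gt0 x0) => x; apply: Rpower_pos.
rewrite Rpower_plus Rpower_1 //.
Qed.
End Main.
Arguments Msum {X Y} q rho P G.
Arguments Nsum {X Y} q rho P Q.
Arguments Dsum {X Y} q rho P.

Section Main2.
Variables (X Y : finType) (q rho : R).
Hypothesis Hrho : 0 < rho.

Lemma harmG (G : X -> Y -> nat) (Hcg : cond_guess G) (x0 : X) y :
  sumR (fun x => / INR (G x y)) <= 1 + ln (INR #|X|).
Proof.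
case: (Hcg y) => H1 [Hinj Hsurj].
rewrite (@reindexG X (G^~ y) H1 Hinj Hsurj (fun k => / INR k)).
apply: harmonic; case/andP: (H1 x0) => A B; exact: leq_trans A B.
Qed.

Lemma sumv_pos (G : X -> Y -> nat) (Hcg : cond_guess G) (x0 : X) y :
  0 < sumR (fun x => / INR (G x y)).
Proof.
apply: (sumR_gt0 x0) => x; apply: Rinv_0_lt_compat; apply: lt_0_INR; apply/ltP.
by case: (Hcg y) => H1 _; case/andP: (H1 x).
Qed.

Lemma L2_bound (P : X -> Y -> R) (G : X -> Y -> nat) (x0 : X) : (forall x y, 0 < P x y) -> cond_guess G ->
  Dsum q rho P <= Msum q rho P G * Rpower (1 + ln (INR #|X|)) rho.
Proof.
move=> HP Hcg.
rewrite /Dsum /Msum sumR_exchange Rmult_comm -sumR_scal; apply: sumR_le => y.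
have Gpos : forall x, 0 < INR (G x y).
  move=> x; apply: lt_0_INR; apply/ltP.
  by case: (Hcg y) => H1 _; case/andP: (H1 x).
set s := / (1 + rho).
have Hs : 0 < s < 1.
  split; first (apply: Rinv_0_lt_compat; lra).
  rewrite /s -Rinv_1; apply: Rinv_lt_contravar; lra.
set u := fun x => Rpower (INR (G x y)) rho * Rpower (P x y) q.
set v := fun x => / INR (G x y).
have Hu : forall x, 0 < u x by move=> x; apply: Rmult_lt_0_compat; apply: Rpower_pos.
have Hv : forall x, 0 < v x by move=> x; apply: Rinv_0_lt_compat.
have H := @holder X x0 u v s Hu Hv Hs.
have E : forall x, Rpower (u x) s * Rpower (v x) (1 - s) = Rpower (P x y) (q / (1 + rho)).
  move=> x; rewrite /u /v /Rpower ln_mult ?ln_Rinv ?ln_exp //; try apply: exp_pos.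
  rewrite -exp_plus; f_equal; rewrite /s; field; lra.
rewrite (sumR_ext E) in H.
have HA : 0 < sumR (fun x => Rpower (P x y) (q / (1 + rho))) by apply: (sumR_gt0 x0) => x; apply: Rpower_pos.
have HSu : 0 < sumR u by apply: (sumR_gt0 x0).
have HSv : 0 < sumR v by apply: (sumR_gt0 x0).
have H2 := Rle_Rpower_l _ _ (1 + rho) (ltac:(lra) : 0 <= 1 + rho) (conj HA H).
rewrite -Rpower_mult_distr in H2; try apply: Rpower_pos.
rewrite !Rpower_mult in H2.
have E1 : s * (1 + rho) = 1 by rewrite /s; field; lra.
have E2 : (1 - s) * (1 + rho) = rho by rewrite /s; field; lra.
rewrite E1 E2 in H2.
rewrite Rpower_1 // in H2.
have H3 := Rle_Rpower_l _ _ rho (Rlt_le _ _ Hrho) (conj HSv (harmG G Hcg x0 y)).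
have H4 := Rmult_le_compat_l (sumR u) _ _ (Rlt_le _ _ HSu) H3.
lra.
Qed.
End Main2.

Lemma pmf_inhabX (X Y : finType) (P : X -> Y -> R) : pos_pmf P -> exists x : X, True.
Proof.
case=> _ H; case: (pickP (@predT X)) => [x _|Hn]; first by exists x.
exfalso; move: H; rewrite /sumR big1; first lra.
by move=> x; have := Hn x.
Qed.

Lemma pmf_inhabY (X Y : finType) (P : X -> Y -> R) : pos_pmf P -> exists y : Y, True.
Proof.
case=> _ H; case: (pickP (@predT Y)) => [y _|Hn]; first by exists y.
exfalso; move: H; rewrite /sumR big1; first lra.
move=> x _; rewrite big1 //.
by move=> y; have := Hn y.
Qed.

Section Main3.
Variables (X Y : finType) (q rho : R).
Hypothesis Hrho : 0 < rho.
Hypothesis Hq : q <> 0.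

Definition ZG (G : X -> Y -> nat) :=
  sumR (fun x => sumR (fun y => Rpower (INR (G x y)) (- (1 + rho) / q))).
Definition QG (G : X -> Y -> nat) x y :=
  Rpower (INR (G x y)) (- (1 + rho) / q) / ZG G.

Lemma ZG_pos G (x0 : X) (y0 : Y) : 0 < ZG G.
Proof.
apply: (sumR_gt0 x0) => x; apply: (sumR_gt0 y0) => y; apply: Rpower_pos.
Qed.

Lemma QG_pmf G (x0 : X) (y0 : Y) : pos_pmf (QG G).
Proof.
have HZ := ZG_pos G x0 y0.
split.
- move=> x y; apply: Rdiv_lt_0_compat => //; apply: Rpower_pos.
- rewrite (sumR_ext (g := fun x => / ZG G * sumR (fun y => Rpower (INR (G x y)) (- (1 + rho) / q)))).
    rewrite sumR_scal -/(ZG G); field; lra.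
  move=> x; rewrite -sumR_scal; apply: sumR_ext => y; rewrite /QG /Rdiv; ring.
Qed.

Lemma L1_bound (P : X -> Y -> R) (G : X -> Y -> nat) (x0 : X) (y0 : Y) :
  (forall x y, 0 < P x y) -> cond_guess G ->
  Nsum q rho P (QG G) <= Msum q rho P G * Rpower (1 + ln (INR #|X|)) rho.
Proof.
move=> HP Hcg.
have HZ := ZG_pos G x0 y0.
set Z := ZG G.
rewrite /Nsum /Msum sumR_exchange Rmult_comm -sumR_scal; apply: sumR_le => y.
have Gpos : forall x, 0 < INR (G x y).
  move=> x; apply: lt_0_INR; apply/ltP.
  by case: (Hcg y) => H1 _; case/andP: (H1 x).
set a := q / (1 + rho).
have lnQ : forall x, ln (QG G x y) = (- (1 + rho) / q) * ln (INR (G x y)) - ln Z.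
  move=> x; rewrite /QG -/Z /Rdiv ln_mult ?ln_Rinv //; last by apply: Rinv_0_lt_compat.
    by rewrite /Rpower ln_exp.
  exact: Rpower_pos.
have E1 : forall x, Rpower (P x y) q * Rpower (QG G x y) (a - q) =
    Rpower Z (q - a) * (Rpower (INR (G x y)) rho * Rpower (P x y) q).
  move=> x; rewrite {2}/Rpower lnQ /Rpower.
  have -> : (a - q) * (- (1 + rho) / q * ln (INR (G x y)) - ln Z) =
            (q - a) * ln Z + rho * ln (INR (G x y)) by rewrite /a; field; lra.
  rewrite exp_plus; ring.
have E2 : forall x, Rpower (QG G x y) a = Rpower Z (- a) * / INR (G x y).
  move=> x; rewrite /Rpower lnQ -{2}(exp_ln _ (Gpos x)) -exp_Ropp -exp_plus; f_equal.
  rewrite /a; field; lra.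
rewrite (sumR_ext E1) (sumR_ext E2) !sumR_scal.
have HSv : 0 < sumR (fun x => / INR (G x y)).
  apply: (sumR_gt0 x0) => x; apply: Rinv_0_lt_compat; exact: Gpos.
rewrite -Rpower_mult_distr; try (apply: Rpower_pos); last exact: HSv.
rewrite Rpower_mult.
have EZ : Rpower Z (q - a) * Rpower Z (- a * rho) = 1.
  rewrite -Rpower_plus (_ : q - a + - a * rho = 0); first exact: Rpower_O.
  rewrite /a; field; lra.
have HSu : 0 <= sumR (fun x => Rpower (INR (G x y)) rho * Rpower (P x y) q).
  apply: sumR_ge0 => x; left; apply: Rmult_lt_0_compat; apply: Rpower_pos.
have H3 := Rle_Rpower_l _ _ rho (Rlt_le _ _ Hrho) (conj HSv (@harmG X Y G Hcg x0 y)).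
have H4 := Rmult_le_compat_l _ _ _ HSu H3.
set A := sumR (fun x => Rpower (INR (G x y)) rho * Rpower (P x y) q) in H4 HSu *.
set B := Rpower (sumR (fun x => / INR (G x y))) rho in H4 *.
have -> : Rpower Z (q - a) * A * (Rpower Z (- a * rho) * B) =
          (Rpower Z (q - a) * Rpower Z (- a * rho)) * (A * B) by ring.
rewrite EZ; lra.
Qed.
End Main3.

Lemma Gstar_exists (X Y : finType) q (P : X -> Y -> R) : exists G, is_Gstar q P G.
Proof.
pose r y := fun a b : X => if Rle_dec (condq q P b y) (condq q P a y) then true else false.
pose s y := sort (r y) (enum X).
exists (fun x y => (index x (s y)).+1).
have Hsz : forall y, size (s y) = #|X| by move=> y; rewrite size_sort cardE.
have Hun : forall y, uniq (s y) by move=> y; rewrite sort_uniq enum_uniq.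
have Hmem : forall y x, x \in s y by move=> y x; rewrite mem_sort mem_enum.
have Htr : forall y, transitive (r y).
  move=> y b a c; rewrite /r.
  case: Rle_dec => // H1; case: Rle_dec => // H2; case: Rle_dec => // H3.
  exfalso; lra.
have Hto : forall y, total (r y).
  move=> y a b; rewrite /r.
  case: Rle_dec => // H1; case: Rle_dec => // H2.
  exfalso; lra.
split.
- move=> y; split; [|split].
  + move=> x; rewrite ltnS -(Hsz y) index_mem Hmem //.
  + move=> x x' [] Hxx'.
    by rewrite -(nth_index x (Hmem y x)) Hxx' nth_index.
  + move=> k /andP [Hk1 Hk2].
    case Es : (s y) => [|d s'].
      by have := Hsz y; rewrite Es /= => E; rewrite -E in Hk2; case: k Hk1 Hk2.
    rewrite -Es; exists (nth d (s y) k.-1).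
    rewrite index_uniq ?prednK // Hsz.
    by case: k Hk1 Hk2 => // k _ /=.
- move=> x x' y /= Hlt.
  have := @sorted_ltn_nth _ (r y) (Htr y) x (s y) (sort_sorted (Hto y) _)
            (index x (s y)) (index x' (s y)).
  rewrite ltnS in Hlt.
  rewrite !inE !index_mem !Hmem !nth_index // => /(_ isT isT Hlt).
  rewrite /r; case: Rle_dec => //.
Qed.

Section Fin.
Variables (X Y : finType) (q rho : R).
Hypothesis Hrho : 0 < rho.
Hypothesis Hq : q <> 0.
Variables (x0 : X) (y0 : Y).

Lemma RE_eq (P Q : X -> Y -> R) :
  q * RE (q / (1 + rho)) q P Q = / rho * ln (Nsum q rho P Q / Dsum q rho P).
Proof.
rewrite /RE /Nsum /Dsum.
have -> : q / (q / (1 + rho)) - 1 = rho by field; lra.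
have -> : q / (q / (1 + rho)) = 1 + rho by field; lra.
have Hqr : q * (1 + rho) - q <> 0.
  have -> : q * (1 + rho) - q = q * rho by ring.
  by move/Rmult_integral => [] ; lra.
rewrite -Rmult_assoc; f_equal; field; repeat split; lra.
Qed.

Lemma Msum_pos (P : X -> Y -> R) (G : X -> Y -> nat) : (forall x y, 0 < P x y) -> cond_guess G -> 0 < Msum q rho P G.
Proof.
move=> HP Hcg; apply: (sumR_gt0 x0) => x; apply: (sumR_gt0 y0) => y.
apply: Rmult_lt_0_compat; apply: Rpower_pos.
Qed.

Lemma Dsum_pos (P : X -> Y -> R) : 0 < Dsum q rho P.
Proof. apply: (sumR_gt0 y0) => y; apply: Rpower_pos. Qed.

Lemma Nsum_pos (P Q : X -> Y -> R) : (forall x y, 0 < P x y) -> 0 < Nsum q rho P Q.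
Proof.
move=> HP; apply: (sumR_gt0 y0) => y; apply: Rmult_lt_0_compat; last exact: Rpower_pos.
apply: (sumR_gt0 x0) => x; apply: Rmult_lt_0_compat; apply: Rpower_pos.
Qed.

Lemma Zp_pos (P : X -> Y -> R) : 0 < sumR (fun x => sumR (fun y => Rpower (P x y) q)).
Proof. apply: (sumR_gt0 x0) => x; apply: (sumR_gt0 y0) => y; apply: Rpower_pos. Qed.

Lemma red_eq (P : X -> Y -> R) (G G' : X -> Y -> nat) : (forall x y, 0 < P x y) -> cond_guess G -> is_Gstar q P G' ->
  opt_moment q rho P = guess_moment q rho P G' ->
  redundancy q rho P G = / rho * (ln (Msum q rho P G) - ln (Msum q rho P G')).
Proof.
move=> HP Hcg HG' Eopt.
rewrite /redundancy Eopt /guess_moment /Eq.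
have Hz := Zp_pos P.
have H1 := Msum_pos P G HP Hcg.
have H2 := Msum_pos P G' HP (proj1 HG').
rewrite /Rdiv !ln_mult //; try (apply: Rinv_0_lt_compat; done).
rewrite /Msum in H1 H2 *; ring.
Qed.

Lemma opt_spec (P : X -> Y -> R) : exists G', is_Gstar q P G' /\ opt_moment q rho P = guess_moment q rho P G'.
Proof.
rewrite /opt_moment.
set Pr := fun v => exists G, is_Gstar q P G /\ v = guess_moment q rho P G.
have [G HG] := @Gstar_exists X Y q P.
have : Pr (epsilon (inhabits 0) Pr).
  apply: epsilon_spec; exists (guess_moment q rho P G); by exists G.
by case=> G' [HG' E]; exists G'.
Qed.

End Fin.

Theorem theorem7 (X Y : finType) (Fam : (X -> Y -> R) -> Prop)
  (rho q : R) (Hrho : 0 < rho) (Hq : q <> 0)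
  (HFam : forall P, Fam P -> pos_pmf P)
  (C : R) (Qstar : X -> Y -> R) (HQstar : pos_pmf Qstar)
  (HC : is_lub (fun v => exists P, Fam P /\ v = q * RE (q / (1 + rho)) q P Qstar) C)
  (Hmin : forall Q : X -> Y -> R, pos_pmf Q ->
     forall v, is_upper_bound (fun w => exists P, Fam P /\ w = q * RE (q / (1 + rho)) q P Q) v ->
     C <= v) :
  (forall G : X -> Y -> nat, cond_guess G ->
     forall b, b < C - ln (1 + ln (INR #|X|)) ->
     exists P, Fam P /\ b < redundancy q rho P G) /\
  (forall Gt : X -> Y -> nat, is_Gstar q Qstar Gt ->
     forall P, Fam P -> redundancy q rho P Gt <= C + ln (1 + ln (INR #|X|))).
Proof.
have [x0 _] := @pmf_inhabX X Y Qstar HQstar.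
have [y0 _] := @pmf_inhabY X Y Qstar HQstar.
have HM : (0 < #|X|)%N by apply/card_gt0P; exists x0.
have HMR : 1 <= INR #|X| by apply: (le_INR 1); apply/leP.
have HlnM : 0 <= ln (INR #|X|) by rewrite -ln_1; apply: ln_le'; lra.
set K := 1 + ln (INR #|X|).
have HK : 0 < K by rewrite /K; lra.
have HKr : ln (Rpower K rho) = rho * ln K by rewrite ln_Rpower.
have HKp := Rpower_pos K rho.
have Hri : 0 < / rho by apply: Rinv_0_lt_compat.
split.
- move=> G Hcg b Hb.
  apply: NNPP => Hn.
  have Hub : forall P, Fam P -> redundancy q rho P G <= b.
    move=> P HP; apply: Rnot_lt_le => Hlt; apply: Hn; by exists P.
  have HQG := QG_pmf X Y q rho G x0 y0.
  have := Hmin _ HQG (b + ln K).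
  have Hup : is_upper_bound (fun w => exists P, Fam P /\ w = q * RE (q / (1 + rho)) q P (QG X Y q rho G)) (b + ln K).
    move=> w [P [HFP ->]].
    have [HPpos _] := HFam P HFP.
    have [G' [HG' Eopt]] := opt_spec X Y q rho P.
    have Hr := red_eq X Y q rho x0 y0 P _ _ HPpos Hcg HG' Eopt.
    have Hr2 := Hub P HFP.
    rewrite (RE_eq X Y q rho Hrho Hq).
    have HN := Nsum_pos X Y q rho x0 y0 P (QG X Y q rho G) HPpos.
    have HD := Dsum_pos X Y q rho y0 P.
    have HMG := Msum_pos X Y q rho x0 y0 P G HPpos Hcg.
    have HMG' := Msum_pos X Y q rho x0 y0 P G' HPpos (proj1 HG').
    have L1 := L1_bound X Y q rho Hrho Hq P G x0 y0 HPpos Hcg.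
    have U := U_bound X Y q rho Hrho P P G' HPpos HG'.
    rewrite UP_eq in U; last (by exists x0); last exact: HPpos.
    have lnL1 := ln_le' _ _ HN L1.
    rewrite ln_mult // HKr in lnL1.
    have lnU := ln_le' _ _ HMG' U.
    rewrite /Rdiv ln_mult ?ln_Rinv //; last exact: Rinv_0_lt_compat.
    rewrite Hr in Hr2.
    have : ln (Msum q rho P G) - ln (Msum q rho P G') <= rho * b.
      have := Rmult_le_compat_l rho _ _ (Rlt_le _ _ Hrho) Hr2.
      by rewrite -Rmult_assoc Rinv_r ?Rmult_1_l; lra.
    move=> H.
    have H5 : ln (Nsum q rho P (QG X Y q rho G)) + - ln (Dsum q rho P) <= rho * (b + ln K) by lra.
    have := Rmult_le_compat_l (/ rho) _ _ (Rlt_le _ _ Hri) H5.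
    by rewrite -Rmult_assoc Rinv_l ?Rmult_1_l; lra.
  move=> /(_ Hup); lra.
- move=> Gt HGt P HFP.
  have [HPpos _] := HFam P HFP.
  have [G' [HG' Eopt]] := opt_spec X Y q rho P.
  have Hcg := proj1 HGt.
  rewrite (red_eq X Y q rho x0 y0 P _ _ HPpos Hcg HG' Eopt).
  have HN := Nsum_pos X Y q rho x0 y0 P Qstar HPpos.
  have HD := Dsum_pos X Y q rho y0 P.
  have HMG := Msum_pos X Y q rho x0 y0 P Gt HPpos Hcg.
  have HMG' := Msum_pos X Y q rho x0 y0 P G' HPpos (proj1 HG').
  have U := U_bound X Y q rho Hrho P Qstar Gt (proj1 HQstar) HGt.
  have L2 := L2_bound X Y q rho Hrho P G' x0 HPpos (proj1 HG').
  have lnU := ln_le' _ _ HMG U.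
  have lnL2 := ln_le' _ _ HD L2.
  rewrite ln_mult // HKr in lnL2.
  have HCb : q * RE (q / (1 + rho)) q P Qstar <= C.
    by apply: (proj1 HC); exists P.
  rewrite (RE_eq X Y q rho Hrho Hq) /Rdiv ln_mult ?ln_Rinv // in HCb; last exact: Rinv_0_lt_compat.
  have H5 : ln (Msum q rho P Gt) - ln (Msum q rho P G') <=
            (ln (Nsum q rho P Qstar) + - ln (Dsum q rho P)) + rho * ln K by lra.
  have := Rmult_le_compat_l (/ rho) _ _ (Rlt_le _ _ Hri) H5.
  rewrite Rmult_plus_distr_l -(Rmult_assoc (/ rho) rho) Rinv_l ?Rmult_1_l; lra.
Qed.
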